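(* In the setting described in the context, suppose a gradient step is taken on the repeated example $(\mathbf{z}^{\mathrm{mem}},\mathbf{e}^{\mathrm{mem}})$ at step $i$, and then $m$ gradient steps are taken on non-repeated examples $(\mathbf{z}^{(i+1)},\mathbf{e}^{(i+1)}),\dots,(\mathbf{z}^{(i+m)},\mathbf{e}^{(i+m)})$. Then $$(\mathbf{e}^{\mathrm{mem}})^\top f^{(i+m)}(\mathbf{z}^{\mathrm{mem}})\ \le\ (\mathbf{e}^{\mathrm{mem}})^\top f^{(i)}(\mathbf{z}^{\mathrm{mem}})-\gamma\, m\,\epsilon\, c_{\min}.$$
   Context: Model: $f(\mathbf{z})=\mathbf{W}_{\mathrm{proj}}\mathbf{z}\in\mathbb{R}^{V}$ (logits over a vocabulary of size $V\ge2$), where $\mathbf{z}=\mathbf{z}(\mathbf{s})$ is the (fixed, since the first layer is frozen) hidden activation of sequence $\mathbf{s}$; $f^{(t)}$ denotes the model with parameter $\mathbf{W}_{\mathrm{proj}}^{(t)}$ after the $t$-th update. Training: batch size 1, cross-entropy loss with softmax $\sigma$, learning rate $\gamma>0$; an update on example $(\mathbf{z},\mathbf{e})$ is $\mathbf{W}_{\mathrm{proj}}\leftarrow\mathbf{W}_{\mathrm{proj}}+\gamma(\mathbf{e}-\sigma(f(\mathbf{z})))\mathbf{z}^\top$. Next-token targets $\mathbf{e}$ are one-hot (standard basis) vectors in $\mathbb{R}^V$; each non-repeated example has target $\mathbf{e}^{(j)}\neq\mathbf{e}^{\mathrm{mem}}$. Assumptions: $\|\mathbf{z}\|_2=1$ for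 all activations; $\|\mathbf{W}_{\mathrm{proj}}\|_2<C_{\mathrm{proj}}/2$ throughout training; $\mathbf{z}^{(j)\top}\mathbf{z}^{\mathrm{mem}}\ge\epsilon>0$ for all non-repeated examples $j$. Constant: $c_{\min}=\exp(-C_{\mathrm{proj}})/V$. *)

(* Defs.v *)
From HB Require Import structures.
From mathcomp Require Import all_boot all_order all_algebra.
From mathcomp Require Import all_classical all_reals all_analysis.
Set Implicit Arguments. Unset Strict Implicit. Unset Printing Implicit Defensive.
Import Order.TTheory GRing.Theory Num.Theory.
Local Open Scope ring_scope.
Local Open Scope classical_set_scope.

Definition vnorm2 (R : realType) (n : nat) (x : 'cV[R]_n) : R :=
  Num.sqrt (\sum_(i < n) x i 0 ^+ 2).

Definition spec_norm (R : realType) (p q : nat) (W : 'M[R]_(p, q)) : R :=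
  sup [set vnorm2 (W *m x) | x in [set x : 'cV[R]_q | vnorm2 x = 1]].

Definition softmax (R : realType) (V : nat) (v : 'cV[R]_V) : 'cV[R]_V :=
  \col_(k < V) (expR (v k 0) / \sum_(j < V) expR (v j 0)).

Definition onehot (R : realType) (V : nat) (k : 'I_V) : 'cV[R]_V := delta_mx k 0.

Definition logits (R : realType) (V d : nat) (W : 'M[R]_(V, d)) (z : 'cV[R]_d)
  : 'cV[R]_V := W *m z.

(* one SGD step (batch size 1, cross-entropy) on example (z, e_k) *)
Definition sgd_step (R : realType) (V d : nat) (gamma : R) (W : 'M[R]_(V, d))
  (z : 'cV[R]_d) (k : 'I_V) : 'M[R]_(V, d) :=
  W + gamma *: ((onehot R k - softmax (logits W z)) *m z^T).

Definition eval_target (R : realType) (V : nat) (k : 'I_V) (v : 'cV[R]_V) : R :=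
  ((onehot R k)^T *m v) 0 0.

Definition c_min (R : realType) (V : nat) (Cproj : R) : R :=
  expR (- Cproj) / V%:R.

(* Main.v *)
Require Import Defs.
From HB Require Import structures.
From mathcomp Require Import all_boot all_order all_algebra.
From mathcomp Require Import all_classical all_reals all_analysis.
From mathcomp Require Import ring lra zify.
Import Order.TTheory GRing.Theory Num.Theory.
Local Open Scope ring_scope.

Lemma eval_targetE (R : realType) V (k : 'I_V) (v : 'cV[R]_V) :
  eval_target k v = v k 0.
Proof. by rewrite /eval_target /onehot trmx_delta -rowE mxE. Qed.

Lemma entry_le_vnorm (R : realType) n (x : 'cV[R]_n) j : `|x j 0| <= vnorm2 x.
Proof.
rewrite /vnorm2 -sqrtr_sqr ler_sqrt; last by rewrite sumr_ge0 // => i _; rewrite sqr_ge0.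
rewrite (bigD1 j) //= lerDl sumr_ge0 // => i _; exact: sqr_ge0.
Qed.

Lemma vnorm2_ge0 (R : realType) n (x : 'cV[R]_n) : 0 <= vnorm2 x.
Proof. exact: sqrtr_ge0. Qed.

Lemma vnorm_le_spec (R : realType) p q (W : 'M[R]_(p, q)) (x : 'cV[R]_q) :
  vnorm2 x = 1 -> vnorm2 (W *m x) <= spec_norm W.
Proof.
move=> hx; apply: ub_le_sup; last by exists x.
pose r k := \sum_(j < q) `|W k j|.
exists (Num.sqrt (\sum_(k < p) r k ^+ 2)) => _ [y hy <-].
rewrite /vnorm2 ler_sqrt; last by rewrite sumr_ge0 // => i _; rewrite sqr_ge0.
apply: ler_sum => k _.
have h1 : `|(W *m y) k 0| <= r k.
  rewrite mxE (le_trans (ler_norm_sum _ _ _)) // ler_sum // => j _.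
  rewrite normrM ler_piMr //.
  by rewrite -hy entry_le_vnorm.
rewrite -real_normK ?num_real // lerXn2r // ?nnegrE //.
exact: le_trans h1.
Qed.

Lemma step_change (R : realType) V d (gamma : R) (W : 'M[R]_(V, d)) (z zm : 'cV[R]_d) (k kk : 'I_V) :
  kk != k ->
  (sgd_step gamma W z kk *m zm) k 0 =
  (W *m zm) k 0 - gamma * (softmax (logits W z) k 0 * (z^T *m zm) 0 0).
Proof.
move=> hk; rewrite /sgd_step mulmxDl -scalemxAl -mulmxA.
rewrite [LHS]mxE [X in _ + X]mxE.
rewrite [X in _ * X]mxE big_ord1.
rewrite [X in _ * (X * _)]mxE.
rewrite /onehot !mxE eq_sym (negbTE hk) /=.
rewrite /logits; ring.
Qed.

Lemma softmax_lb (R : realType) V (C : R) (v : 'cV[R]_V) k :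
  (forall j, `|v j 0| <= C / 2) -> c_min V C <= softmax v k 0.
Proof.
move=> hb; rewrite /c_min /softmax mxE.
have Vpos : 0 < V%:R :> R by rewrite ltr0n; case: k => /= k; case: V {v hb} => //.
have hS : \sum_(j < V) expR (v j 0) <= V%:R * expR (C / 2).
  have <- : \sum_(j < V) expR (C / 2) = V%:R * expR (C / 2) :> R
    by rewrite sumr_const card_ord mulr_natl.
  rewrite ler_sum // => j _.
  by rewrite ler_expR; case/ler_normlP: (hb j).
have Spos : 0 < \sum_(j < V) expR (v j 0).
  rewrite (bigD1 k) //= ltr_wpDr ?expR_gt0 // sumr_ge0 // => j _; exact: expR_ge0.
have hk : expR (- (C / 2)) <= expR (v k 0).
  by rewrite ler_expR; case/ler_normlP: (hb k); rewrite lerNl.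
rewrite ler_pdivrMr // mulrAC ler_pdivlMr //.
have hab : expR (- (C / 2)) * expR (C / 2) = 1 by rewrite -expRD addNr expR0.
have -> : expR (- C) = expR (- (C/2)) * expR (- (C/2)) by rewrite -expRD; congr expR; lra.
set a := expR (- (C / 2)) in hk hab *; set b := expR (C / 2) in hS hab *.
set S := \sum_(j < V) expR (v j 0) in hS Spos *.
have apos : 0 < a by rewrite expR_gt0.
have h1 : a * a * S <= a * a * (V%:R * b) by rewrite ler_pM2l ?mulr_gt0.
have h2 : a * a * (V%:R * b) = a * V%:R 
  by rewrite -[RHS]mulr1 -hab; ring.
rewrite (le_trans h1) // h2 ler_pM2r //.
Qed.

Theorem theoremG2 (R : realType) (V d : nat) (hV : (1 < V)%N)
  (gamma Cproj eps : R) (hgamma : 0 < gamma) (heps : 0 < eps)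
  (W : nat -> 'M[R]_(V, d))          (* W t = W_proj^(t), after the t-th update *)
  (zs : nat -> 'cV[R]_d)             (* activation of the t-th training example *)
  (es : nat -> 'I_V)                 (* target token (one-hot index) of the t-th example *)
  (zmem : 'cV[R]_d) (kmem : 'I_V)    (* the repeated example (z^mem, e^mem) *)
  (hstep : forall t, W t.+1 = sgd_step gamma (W t) (zs t.+1) (es t.+1))
  (hznorm : forall t, vnorm2 (zs t) = 1) (hzmem : vnorm2 zmem = 1)
  (hW : forall t, spec_norm (W t) < Cproj / 2)
  (i m : nat) (hi : (0 < i)%N)
  (hmem_z : zs i = zmem) (hmem_e : es i = kmem)
  (hnr_e : forall j, (i < j <= i + m)%N -> es j <> kmem)
  (hnr_z : forall j, (i < j <= i + m)%N -> eps <= ((zs j)^T *m zmem) 0 0) :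
  eval_target kmem (logits (W (i + m)%N) zmem)
    <= eval_target kmem (logits (W i) zmem) - gamma * m%:R * eps * c_min V Cproj.
Proof.
rewrite !eval_targetE /logits.
have c0 : 0 <= c_min V Cproj.
  by rewrite /c_min divr_ge0 ?expR_ge0 ?ler0n.
suff H : forall n, (n <= m)%N -> (W (i + n)%N *m zmem) kmem 0
    <= (W i *m zmem) kmem 0 - gamma * n%:R * eps * c_min V Cproj by exact: H.
elim=> [_|n IH hn]; first by rewrite addn0 mulr0n mulr0 !mul0r subr0.
have hj : (i < i + n.+1 <= i + m)%N by apply/andP; split; lia.
rewrite addnS hstep step_change; last first.
  by apply/eqP; rewrite -addnS; exact: hnr_e.
have hs := hnr_z _ hj; rewrite addnS in hs.
have hsm : c_min V Cproj <= softmax (logits (W (i + n)%N) (zs (i + n).+1)) kmem 0.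
  apply: softmax_lb => j; apply/ltW; apply: le_lt_trans (hW (i + n)%N).
  rewrite /logits.
apply: (le_trans (entry_le_vnorm _ _ _ j)); exact: vnorm_le_spec.
have hp : c_min V Cproj * eps <= softmax (logits (W (i + n)%N) (zs (i + n).+1)) kmem 0
     * ((zs (i + n).+1)^T *m zmem) 0 0 by apply: ler_pM => //; exact: ltW.
have IH' := IH (ltnW hn).
set s := softmax _ _ _ * _ in hp *.
have : gamma * (c_min V Cproj * eps) <= gamma * s by rewrite ler_pM2l.
have -> : gamma * n.+1%:R * eps * c_min V Cproj =
  gamma * n%:R * eps * c_min V Cproj + gamma * (c_min V Cproj * eps).
  by rewrite -addn1 natrD; ring.
move=> hg; lra.
Qed.
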